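(* Let $r\ge3$, $n>r$, $c\ge1$, $\lambda\in\Lambda(n,r)$ (regarded as $n$-periodic) and $1\le i\le n$. In $T$: (i) If $\lambda_i=0$, there is a nonzero $z\in\mathbb{Z}[v,v^{-1}]$ such that $F_i^cE_i^c1_\lambda=z1_\lambda$ if $\lambda_{i+1}\ge c$, and $F_i^cE_i^c1_\lambda=0$ otherwise; moreover, if $c=\lambda_{i+1}=1$ then $z=1$. (ii) If $\lambda_{i+1}=0$, there is a nonzero $z'\in\mathbb{Z}[v,v^{-1}]$ such that $E_i^cF_i^c1_\lambda=z'1_\lambda$ if $\lambda_i\ge c$, and $E_i^cF_i^c1_\lambda=0$ otherwise; moreover, if $c=\lambda_i=1$ then $z'=1$.
   Context: $T$ is the $\mathbb{Q}(v)$-algebra with generators $E_i,F_i,K_i^{\pm1}$ ($1\le i\le n$, indices mod $n$) and relations: $K_iK_j=K_jK_i$; $K_iK_i^{-1}=K_i^{-1}K_i=1$; $K_iE_j=v^{\epsilon^+(i,j)}E_jK_i$; $K_iF_j=v^{-\epsilon^+(i,j)}F_jK_i$ ($\epsilon^+(i,j)=1$ if $j=i$, $-1$ if $j\equiv i-1\pmod n$, $0$ otherwise); $E_iF_j-F_jE_i=\delta_{ij}\frac{K_iK_{i+1}^{-1}-K_i^{-1}K_{i+1}}{v-v^{-1}}$; $E_iE_j=E_jE_i$, $F_iF_j=F_jF_i$ if $i-j\not\equiv\pm1$; $E_i^2E_j-(v+v^{-1})E_iE_jE_i+E_jE_i^2=0$, $F_i^2F_j-(v+v^{-1})F_iF_jF_i+F_jF_i^2=0$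 if $i-j\equiv\pm1\pmod n$; $K_1\cdots K_n=v^r$; $\prod_{j=0}^r(K_i-v^j)=0$. $\Lambda(n,r)$: compositions of $r$ into $n$ nonnegative parts, extended $n$-periodically. $1_\lambda=\prod_{i=1}^n\prod_{s=1}^{\lambda_i}\frac{K_iv^{-s+1}-K_i^{-1}v^{s-1}}{v^s-v^{-s}}$. *)

(* Defs.v *)
From HB Require Import structures.
From mathcomp Require Import all_boot all_order all_algebra fraction.
Set Implicit Arguments. Unset Strict Implicit. Unset Printing Implicit Defensive.
Import Order.TTheory GRing.Theory Num.Theory.
Local Open Scope ring_scope.

Definition Qv : fieldType := {fraction {poly rat}}.
Definition vq : Qv := tofrac ('X : {poly rat}).

(* z lies in Z[v,v^{-1}] (the Laurent polynomials with integer coefficients) *)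
Definition in_Zvv (z : Qv) : Prop :=
  exists (p : {poly int}) (k : nat),
    z = (map_poly (fun a : int => a%:~R : Qv) p).[vq] / vq ^+ k.

Definition epsp (n i j : nat) : int :=
  if j == i %[mod n] then 1%R
  else if j.+1 == i %[mod n] then (-1)%R else 0%R.

(* The defining relations of T, for generators indexed by nat, n-periodic.
   Kinv i plays the role of K_i^{-1}. *)
Definition T_rels (n r : nat) (A : algType Qv) (E F K Kinv : nat -> A) : Prop :=
  (forall i, E (i + n)%N = E i /\ F (i + n)%N = F i /\
                 K (i + n)%N = K i /\ Kinv (i + n)%N = Kinv i)  /\
      (forall i j, K i * K j = K j * K i)  /\
      (forall i, K i * Kinv i = 1 /\ Kinv i * K i = 1)  /\
      (forall i j, K i * E j = (vq ^ epsp n i j) *: (E j * K i))  /\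
      (forall i j, K i * F j = (vq ^ (- epsp n i j)) *: (F j * K i))  /\
      (forall i j, E i * F j - F j * E i =
         if i == j %[mod n] then
           (vq - vq^-1)^-1 *: (K i * Kinv i.+1 - Kinv i * K i.+1)
         else 0)  /\
      (forall i j, ~~ (i.+1 == j %[mod n]) -> ~~ (j.+1 == i %[mod n]) ->
         E i * E j = E j * E i /\ F i * F j = F j * F i)  /\
      (forall i j, (i.+1 == j %[mod n]) || (j.+1 == i %[mod n]) ->
         E i ^+ 2 * E j - (vq + vq^-1) *: (E i * E j * E i) + E j * E i ^+ 2 = 0 /\
         F i ^+ 2 * F j - (vq + vq^-1) *: (F i * F j * F i) + F j * F i ^+ 2 = 0) /\
      \prod_(1 <= i < n.+1) K i = (vq ^+ r)%:A /\
      (forall i, \prod_(0 <= j < r.+1) (K i - (vq ^+ j)%:A) = 0).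

Definition one_lam (n : nat) (A : algType Qv) (K Kinv : nat -> A)
    (lam : nat -> nat) : A :=
  \prod_(1 <= i < n.+1) \prod_(1 <= s < (lam i).+1)
     ((vq ^+ s - vq ^- s)^-1 *: (vq ^- s.-1 *: K i - vq ^+ s.-1 *: Kinv i)).

(* Main.v *)
Require Import Defs.
From HB Require Import structures.
From mathcomp Require Import all_boot all_order all_algebra fraction.
From mathcomp Require Import ring zify.
Import Order.TTheory GRing.Theory Num.Theory.
Set Implicit Arguments. Unset Strict Implicit. Unset Printing Implicit Defensive.
Local Open Scope ring_scope.

Lemma vq_neq0 : vq != 0.
Proof. by rewrite /vq tofrac_eq0 polyX_eq0. Qed.

Lemma vqX_inj a b : vq ^+ a = vq ^+ b -> a = b.
Proof.
rewrite /vq -!rmorphXn /= => /eqP; rewrite tofrac_eq => /eqP H.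
by have := congr1 (fun p : {poly rat} => size p) H; rewrite !size_polyXn => -[].
Qed.

Lemma vqX_neq0 a : vq ^+ a != 0.
Proof. by rewrite expf_eq0 (negbTE vq_neq0) andbF. Qed.

Lemma vqX_neq a b : a <> b -> vq ^+ a != vq ^+ b.
Proof. by move=> H; apply/eqP => /vqX_inj. Qed.

Lemma vqV_neqX t : vq^-1 != vq ^+ t.
Proof.
apply/eqP => H.
have : vq ^+ t.+1 = vq ^+ 0 by rewrite exprS -H mulfV ?vq_neq0 // expr0.
by move/vqX_inj.
Qed.

Lemma delta_neq0 : vq - vq^-1 != 0.
Proof.
rewrite subr_eq0; apply/eqP => H.
have : vq ^+ 2 = vq ^+ 0.
  by rewrite expr2 {1}H mulVf ?vq_neq0 // expr0.
by move/vqX_inj.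
Qed.
Section PrSec.
Variable A : algType Qv.

Definition Pr (a : A) (s : seq Qv) : A := \prod_(g <- s) (a - g%:A).

Lemma Pr_cons a g s : Pr a (g :: s) = (a - g%:A) * Pr a s.
Proof. by rewrite /Pr big_cons. Qed.

Lemma comm_Pr a c s : GRing.comm c a -> GRing.comm c (Pr a s).
Proof.
move=> H; elim: s => [|g s IH]; first by rewrite /Pr big_nil; apply: commr1.
rewrite Pr_cons; apply: commrM => //; apply: commrB => //.
exact/commr_sym/comm_alg.
Qed.

Arguments comm_Pr {a c} s.

Lemma Pr_eig a s x c : a * x = c *: x ->
  Pr a s * x = (\prod_(g <- s) (c - g)) *: x.
Proof.
move=> H; elim: s => [|g s IH]; first by rewrite /Pr !big_nil mul1r scale1r.
rewrite Pr_cons big_cons -mulrA IH -scalerAr mulrBl mulr_algl H -scalerBl.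
by rewrite scalerA mulrC.
Qed.

Lemma Pr_eigmul a b g t w : GRing.comm a b -> a * w = g *: w ->
  Pr (a * b) [seq g * h | h <- t] * w = g ^+ size t *: (Pr b t * w).
Proof.
move=> hab haw; elim: t => [|h t IH]; first by rewrite /Pr !big_nil scale1r.
rewrite /= !Pr_cons -!mulrA IH -scalerAr.
set u := Pr b t * w.
have hau : a * u = g *: u.
  by rewrite /u mulrA (comm_Pr t hab) -mulrA haw scalerAr.
have -> : (a * b - (g * h)%:A) * u = g *: ((b - h%:A) * u).
  rewrite mulrBl hab -mulrA hau -scalerAr mulr_algl.
  by rewrite [in RHS]mulrBl mulr_algl scalerBr scalerA.
by rewrite scalerA exprS mulrC.
Qed.

Lemma Pr_pair a b s t x : GRing.comm a b -> Pr a s * x = 0 -> Pr b t * x = 0 ->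
  Pr (a * b) [seq g * h | g <- s, h <- t] * x = 0.
Proof.
move=> hab; elim: s x => [|g s IH] x Hs Ht.
  by move: Hs; rewrite /Pr !big_nil.
rewrite allpairs_cons /Pr big_cat /= -/(Pr _ _) -/(Pr _ _).
set R := Pr (a * b) [seq g * h | g <- s, h <- t].
have cag : GRing.comm a (a - g%:A).
  by apply: commrB => //; apply/commr_sym/comm_alg.
have cbg : GRing.comm b (a - g%:A).
  by apply: commrB; [exact: commr_sym | apply/commr_sym/comm_alg].
have cabg : GRing.comm (a * b) (a - g%:A).
  by apply/commr_sym/commrM; apply/commr_sym.
have HR : R * ((a - g%:A) * x) = 0.
  apply: IH.
    by rewrite mulrA -(comm_Pr s (commr_sym cag)) -Pr_cons.
  by rewrite mulrA -(comm_Pr t (commr_sym cbg)) -mulrA Ht mulr0.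
set w := R * x.
have haw : a * w = g *: w.
  apply/eqP; rewrite -subr_eq0 -mulr_algl -mulrBl; apply/eqP.
  by rewrite /w mulrA (comm_Pr _ (commr_sym cabg)) -mulrA HR.
have hbw : Pr b t * w = 0.
  have c1 : GRing.comm (a * b) (Pr b t).
    by apply: comm_Pr; rewrite /GRing.comm mulrA -hab.
  by rewrite /w mulrA (comm_Pr _ (commr_sym c1)) -mulrA Ht mulr0.
by rewrite -mulrA -/w Pr_eigmul // hbw scaler0.
Qed.

End PrSec.

Section Torus.
Variables (A : algType Qv) (K Kinv : nat -> A).
Hypothesis KK : forall i j, K i * K j = K j * K i.
Hypothesis KKi : forall i, K i * Kinv i = 1 /\ Kinv i * K i = 1.

Lemma KiK j k : GRing.comm (Kinv k) (K j).
Proof.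
rewrite /GRing.comm -[LHS]mulr1 -(KKi k).1 mulrA -(mulrA (Kinv k)) KK mulrA.
by rewrite (KKi k).2 mul1r.
Qed.

Lemma KiKi j k : GRing.comm (Kinv j) (Kinv k).
Proof.
rewrite /GRing.comm -[LHS]mul1r -(KKi k).2 -mulrA (mulrA (K k)) -(KiK k j).
by rewrite -!mulrA (KKi k).1 mulr1.
Qed.

Definition Cm (u : A) := forall j, GRing.comm u (K j) /\ GRing.comm u (Kinv j).
Definition tor (t : A) := forall u, Cm u -> GRing.comm t u.

Lemma Cm_K j : Cm (K j).
Proof. by move=> k; split; [apply: KK | apply/commr_sym/KiK]. Qed.
Lemma Cm_Kinv j : Cm (Kinv j).
Proof. by move=> k; split; [apply: KiK | apply: KiKi]. Qed.
Lemma tor_K j : tor (K j).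
Proof. by move=> u Hu; apply/commr_sym; exact: (Hu j).1. Qed.
Lemma tor_Kinv j : tor (Kinv j).
Proof. by move=> u Hu; apply/commr_sym; exact: (Hu j).2. Qed.
Lemma tor_Cm t : tor t -> Cm t.
Proof. by move=> Ht j; split; apply: Ht; [apply: Cm_K | apply: Cm_Kinv]. Qed.
Lemma tor_comm t u : tor t -> tor u -> GRing.comm t u.
Proof. by move=> Ht Hu; apply: Ht; apply: tor_Cm. Qed.
Lemma torM t u : tor t -> tor u -> tor (t * u).
Proof. by move=> Ht Hu w Hw; apply/commr_sym/commrM; apply/commr_sym; [apply: Ht|apply: Hu]. Qed.
Lemma torD t u : tor t -> tor u -> tor (t + u).
Proof. by move=> Ht Hu w Hw; apply/commr_sym/commrD; apply/commr_sym; [apply: Ht|apply: Hu]. Qed.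
Lemma torB t u : tor t -> tor u -> tor (t - u).
Proof. by move=> Ht Hu w Hw; apply/commr_sym/commrB; apply/commr_sym; [apply: Ht|apply: Hu]. Qed.
Lemma torZ c t : tor t -> tor (c *: t).
Proof. by move=> Ht w Hw; rewrite /GRing.comm -scalerAl Ht // scalerAr. Qed.
Lemma tor1 : tor 1.
Proof. by move=> w _; apply/commr_sym/commr1. Qed.
Lemma tor_alg c : tor (c%:A).
Proof. by move=> w _; apply: comm_alg. Qed.
Lemma tor_prod (s : seq nat) F : (forall i, tor (F i)) -> tor (\prod_(i <- s) F i).
Proof.
move=> H; elim: s => [|i s IH]; first by rewrite big_nil; apply: tor1.
by rewrite big_cons; apply: torM.
Qed.
Lemma tor_Pr j s : tor (Pr (K j) s).
Proof.
elim: s => [|g s IH]; first by rewrite /Pr big_nil; apply: tor1.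
by rewrite Pr_cons; apply: torM => //; apply: torB; [apply: tor_K | apply: tor_alg].
Qed.

Definition fs j s : A :=
  (vq ^+ s - vq ^- s)^-1 *: (vq ^- s.-1 *: K j - vq ^+ s.-1 *: Kinv j).

Lemma tor_fs j s : tor (fs j s).
Proof. by apply: torZ; apply: torB; apply: torZ; [apply: tor_K|apply: tor_Kinv]. Qed.

Lemma fs_fact j s : exists g, tor g /\ fs j s.+1 = (K j - (vq ^+ s)%:A) * g.
Proof.
set c := (vq ^+ s.+1 - vq ^- s.+1)^-1; set a := vq ^+ s.
exists ((c / a) *: ((K j + a%:A) * Kinv j)); split.
  by apply: torZ; apply: torM; [apply: torD; [apply: tor_K|apply: tor_alg]|apply: tor_Kinv].
have a0 : a != 0 by apply: vqX_neq0.
rewrite -scalerAr mulrA.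
have -> : (K j - a%:A) * (K j + a%:A) = K j * K j - (a * a)%:A.
  rewrite mulrDr !mulrBl mulr_algl mulr_algr -[(a * a)%:A]scalerA mulr_algl.
  by rewrite addrA subrK.
rewrite mulrBl -mulrA (KKi j).1 mulr1 mulr_algl scalerBr !scalerA /fs /=.
rewrite -/c -/a scalerBr !scalerA; congr (_ *: _ - _ *: _).
by rewrite mulrA -(mulrA c) mulVf // mulr1.
Qed.

Lemma B_ann r j m :
  \prod_(0 <= t < r.+1) (K j - (vq ^+ t)%:A) = 0 -> (m <= r)%N ->
  Pr (K j) [seq vq ^+ t | t <- iota m (r.+1 - m)] * \prod_(1 <= s < m.+1) fs j s = 0.
Proof.
move=> hP; elim: m => [_|m IH hm].
  rewrite big_geq // mulr1 subn0 /Pr big_map.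
  by move: hP; rewrite /index_iota subn0.
have IH' := IH (ltnW hm).
rewrite big_nat_recr //=.
have [g [tg ->]] := fs_fact j m.
have eq : iota m (r.+1 - m) = m :: iota m.+1 (r.+1 - m.+1).
  by rewrite subSS subSn // ltnW.
move: IH'; rewrite eq /= Pr_cons => IH'.
have tP : tor (\prod_(1 <= s < m.+1) fs j s) by apply: tor_prod => i; apply: tor_fs.
have tKm : tor (K j - (vq ^+ m)%:A) by apply: torB; [apply: tor_K|apply: tor_alg].
rewrite (mulrA (\prod_(1 <= s < m.+1) fs j s)) (tor_comm tP tKm) !mulrA.
by rewrite (tor_comm (tor_Pr _ _) tKm) IH' mul0r.
Qed.

Lemma one_lam_eig n r lam :
  (forall j, \prod_(0 <= t < r.+1) (K j - (vq ^+ t)%:A) = 0) ->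
  \prod_(1 <= i < n.+1) K i = (vq ^+ r)%:A ->
  (\sum_(1 <= k < n.+1) lam k)%N = r ->
  forall j, (1 <= j <= n)%N ->
  K j * one_lam n K Kinv lam = vq ^+ lam j *: one_lam n K Kinv lam.
Proof.
move=> hP hZ hs j hj.
set x := one_lam n K Kinv lam.
have hx : x = \prod_(1 <= k < n.+1) \prod_(1 <= s < (lam k).+1) fs k s by [].
have tB : forall k, tor (\prod_(1 <= s < (lam k).+1) fs k s).
  by move=> k; apply: tor_prod => i; apply: tor_fs.
have lamle : forall k, (1 <= k <= n)%N -> (lam k <= r)%N.
  move=> k hk; rewrite -hs (bigD1_seq k) ?mem_index_iota ?iota_uniq //=.
  exact: leq_addr.
have Q : forall k, (1 <= k <= n)%N ->
    Pr (K k) [seq vq ^+ t | t <- iota (lam k) (r.+1 - lam k)] * x = 0.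
  move=> k /andP [k1 kn].
  rewrite hx (big_cat_nat (n := k)) //=; last by apply: ltnW.
  rewrite (big_ltn (m := k)) //.
  have tL : tor (\prod_(1 <= i < k) \prod_(1 <= s < (lam i).+1) fs i s).
    by apply: tor_prod => i; apply: tB.
  rewrite mulrA (tor_comm (tor_Pr _ _) tL) -mulrA mulrA.
  rewrite -mulrA (mulrA (Pr _ _)) (B_ann (hP k)) ?mul0r ?mulr0 //.
  by apply: lamle; rewrite k1 kn.
set c := vq ^+ lam j.
set y := (K j - c%:A) * x.
pose lam' k := (lam k + (k == j))%N.
have tKj : tor (K j - c%:A) by apply: torB; [apply: tor_K|apply: tor_alg].
have Qy : forall k, (1 <= k <= n)%N ->
    Pr (K k) [seq vq ^+ t | t <- iota (lam' k) (r.+1 - lam' k)] * y = 0.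
  move=> k hk; rewrite /lam'; case: eqP => [->|/eqP nkj].
    rewrite addn1; have := Q j hj.
    have eq : iota (lam j) (r.+1 - lam j) = lam j :: iota (lam j).+1 (r.+1 - (lam j).+1).
      by rewrite subSS subSn // lamle.
    rewrite eq /= Pr_cons => H.
    by rewrite /y mulrA (tor_comm (tor_Pr _ _) tKj); exact: H.
  rewrite addn0 /y mulrA (tor_comm (tor_Pr _ _) tKj) -mulrA Q // mulr0 //.
have Big : forall m, (m <= n)%N -> exists S : seq Qv,
    Pr (\prod_(1 <= k < m.+1) K k) S * y = 0 /\
    (forall g, g \in S -> exists e, g = vq ^+ e /\ (\sum_(1 <= k < m.+1) lam' k <= e)%N).
  elim => [_|m IH hm].
    exists [:: 1]; split.
      by rewrite big_geq // /Pr big_cons big_nil scale1r subrr !mul0r.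
    by move=> g; rewrite inE => /eqP ->; exists 0%N; rewrite big_geq.
  have [S [HS HSe]] := IH (ltnW hm).
  exists [seq g * h | g <- S, h <- [seq vq ^+ t | t <- iota (lam' m.+1) (r.+1 - lam' m.+1)]].
  split.
    rewrite big_nat_recr //=; apply: Pr_pair => //.
      by apply: tor_comm; [apply: tor_prod => i; apply: tor_K | apply: tor_K].
    by apply: Qy; rewrite hm.
  move=> g /allpairsP [[g1 g2] [/= h1 h2 ->]].
  have [e1 [-> he1]] := HSe g1 h1.
  move: h2 => /mapP [t ht ->]; exists (e1 + t)%N; split; first by rewrite exprD.
  rewrite big_nat_recr //=; apply: leq_add => //.
  by move: ht; rewrite mem_iota => /andP [].
have [S [HS HSe]] := Big n (leqnn n).
rewrite hZ in HS.
have hy : (vq ^+ r)%:A * y = vq ^+ r *: y by rewrite mulr_algl.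
rewrite (Pr_eig _ hy) in HS.
have ge : forall g, g \in S -> vq ^+ r - g != 0.
  move=> g /HSe [e [-> he]]; rewrite subr_eq0; apply: vqX_neq => er.
  have : (r.+1 <= \sum_(1 <= k < n.+1) lam' k)%N.
    rewrite /lam' big_split /= hs -addn1 leq_add2l.
    by rewrite (bigD1_seq j) ?mem_index_iota ?iota_uniq //= eqxx.
  by move=> H; have := leq_trans H he; rewrite er ltnn.
have y0 : y = 0.
  move/eqP: HS; rewrite scaler_eq0 => /orP [|/eqP //].
  rewrite prodf_seq_eq0 => /hasP [g hg /= /eqP H].
  by move: (ge g hg); rewrite H eqxx.
by move/eqP: y0; rewrite /y mulrBl mulr_algl subr_eq0 => /eqP.
Qed.
End Torus.

Lemma id1 (F : fieldType) (v w : F) : v != 0 -> w != 0 ->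
  v * (w - w^-1) + w^-1 * (v - v^-1) = v * w - (v * w)^-1.
Proof. by move=> h1 h2; field; rewrite h1 h2. Qed.
Lemma id_sum (F : fieldType) (v w l : F) : v != 0 -> w != 0 -> l != 0 -> v - v^-1 != 0 ->
  (w - w^-1) * (l * v / w - w / (l * v)) + (l / w ^+ 2 - w ^+ 2 / l) / (v - v^-1) * (v - v^-1) ^+ 2
  = (v * w - (v * w)^-1) * (l * v / (v * w) - (v * w) / (l * v)).
Proof.
move=> h1 h2 h3 h4.
have h5 : v * v - 1 != 0.
  have e : v - v^-1 = (v * v - 1) / v by field.
  by move: h4; rewrite e mulf_eq0 negb_or => /andP [].
by field; rewrite h1 h2 h3 h5.
Qed.

Lemma id_add (F : fieldType) (p q a b : F) : a != 0 -> b != 0 ->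
  p / a + q / b = (p * b + q * a) / (a * b).
Proof. by move=> h1 h2; field; rewrite h1 h2. Qed.

Lemma chain (A : algType Qv) (X Y u0 : A) (s : nat -> Qv) :
  Y * u0 = 0 ->
  (forall k, Y * (X * (X ^+ k * u0)) = X * (Y * (X ^+ k * u0)) + s k *: (X ^+ k * u0)) ->
  forall c, Y ^+ c * (X ^+ c * u0) = (\prod_(1 <= k < c.+1) (\sum_(j < k) s j)) *: u0.
Proof.
move=> h0 hs.
have step : forall k, Y * (X ^+ k.+1 * u0) = (\sum_(j < k.+1) s j) *: (X ^+ k * u0).
  elim => [|k IH].
    have := hs 0%N; rewrite expr0 !mul1r h0 mulr0 add0r => ->.
    by rewrite big_ord1.
  rewrite exprS -mulrA hs IH -scalerAr mulrA -exprS -scalerDl.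
  by rewrite [in RHS]big_ord_recr.
elim => [|c IH]; first by rewrite !expr0 !mul1r big_geq // scale1r.
by rewrite exprSr -mulrA step -scalerAr IH scalerA [in RHS]big_nat_recr //= mulrC.
Qed.

Definition delta : Qv := vq - vq^-1.
Definition sfun (L k : nat) : Qv :=
  (vq ^+ L / (vq ^+ k) ^+ 2 - (vq ^+ k) ^+ 2 / vq ^+ L) / delta.
Definition qn (m : nat) : Qv := \sum_(j < m) vq ^+ (m - 1 - j) / vq ^+ j.

Lemma qn_closed m : qn m * delta = vq ^+ m - (vq ^+ m)^-1.
Proof.
elim: m => [|m IH]; first by rewrite /qn big_ord0 mul0r expr0 invr1 subrr.
have -> : qn m.+1 = vq * qn m + (vq ^+ m)^-1.
  rewrite /qn big_ord_recr /= subn1 /= subnn expr0 div1r mulr_sumr; congr (_ + _).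
  apply: eq_bigr => j _; rewrite mulrA -exprS; congr (_ ^+ _ / _).
  by have := ltn_ord j; lia.
have h1 := vq_neq0; have h2 := vqX_neq0 m.
move: IH; rewrite exprS /delta => IH.
rewrite mulrDl -mulrA IH.
exact: (id1 h1 h2).
Qed.


Lemma sum_closed L k :
  (\sum_(j < k) sfun L j) * delta ^+ 2 =
  (vq ^+ k - (vq ^+ k)^-1) * (vq ^+ L * vq / vq ^+ k - vq ^+ k / (vq ^+ L * vq)).
Proof.
have d0 : delta != 0 by apply: delta_neq0.
have h1 := vq_neq0; have hL := vqX_neq0 L.
elim: k => [|k IH]; first by rewrite big_ord0 mul0r expr0 invr1 subrr mul0r.
rewrite big_ord_recr mulrDl IH /sfun (exprS vq k).
have hk := vqX_neq0 k.
rewrite /delta in d0 *.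
exact: (id_sum h1 hk hL d0).
Qed.

Lemma Zvv_add x y : in_Zvv x -> in_Zvv y -> in_Zvv (x + y).
Proof.
move=> [p [k ->]] [q [l ->]].
exists (p * 'X^l + q * 'X^k), (k + l)%N.
rewrite rmorphD !rmorphM /= !map_polyXn hornerD !hornerM !hornerXn.
have hk := vqX_neq0 k; have hl := vqX_neq0 l.
by rewrite exprD (id_add _ _ hk hl).
Qed.

Lemma Zvv_mul x y : in_Zvv x -> in_Zvv y -> in_Zvv (x * y).
Proof.
move=> [p [k ->]] [q [l ->]].
exists (p * q), (k + l)%N.
rewrite rmorphM /= hornerM exprD invfM.
by rewrite mulrACA.
Qed.

Lemma Zvv_mono a b : in_Zvv (vq ^+ a / vq ^+ b).
Proof. by exists 'X^a, b; rewrite map_polyXn hornerXn. Qed.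

Lemma Zvv_1 : in_Zvv 1.
Proof. by have := Zvv_mono 0 0; rewrite expr0 divr1. Qed.

Lemma Zvv_0 : in_Zvv 0.
Proof. by exists 0, 0%N; rewrite rmorph0 horner0 mul0r. Qed.

Lemma Zvv_qn m : in_Zvv (qn m).
Proof.
rewrite /qn; elim/big_ind: _ => //; [exact: Zvv_0 | exact: Zvv_add |].
move=> j _; exact: Zvv_mono.
Qed.

Lemma a_eq L k : (k <= L.+1)%N -> \sum_(j < k) sfun L j = qn k * qn (L.+1 - k).
Proof.
move=> hk.
have d0 : delta ^+ 2 != 0 by rewrite expf_neq0 // delta_neq0.
apply: (mulIf d0); rewrite sum_closed expr2 mulrACA !qn_closed.
have e : vq ^+ (L.+1 - k) = vq ^+ L * vq / vq ^+ k.
  by rewrite -(exprSr vq L) -[in RHS](subnK hk) exprD mulfK ?vqX_neq0.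
by rewrite e invf_div.
Qed.

Lemma a_zero L : \sum_(j < L.+1) sfun L j = 0.
Proof. by rewrite a_eq // subnn /qn big_ord0 mulr0. Qed.

Lemma qn_neq0 m : (0 < m)%N -> qn m != 0.
Proof.
move=> hm; apply/eqP => H.
have : qn m * delta = 0 by rewrite H mul0r.
rewrite qn_closed => /eqP; rewrite subr_eq0 => /eqP H2.
have : vq ^+ (m + m) = vq ^+ 0.
  by rewrite exprD {1}H2 mulVf ?vqX_neq0 // expr0.
by move/vqX_inj => E; move: hm; lia.
Qed.

Lemma id_s1 (R : fieldType) (d w l : R) : d != 0 -> w != 0 -> l != 0 ->
  (l / w ^+ 2 - w ^+ 2 / l) / d = - ((w * 1 / (w^-1 * l) - w^-1 * l / (w * 1)) / d).
Proof. by move=> h1 h2 h3; field; rewrite h1 h2 h3. Qed.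

Lemma id_s2 (R : fieldType) (d w l : R) : d != 0 -> w != 0 -> l != 0 ->
  (l / w ^+ 2 - w ^+ 2 / l) / d = (w^-1 * l / (w * 1) - w * 1 / (w^-1 * l)) / d.
Proof. by move=> h1 h2 h3; field; rewrite h1 h2 h3. Qed.

Section Main.
Variables (A : algType Qv) (E F K Kinv : nat -> A) (n r i : nat).
Hypothesis hn : (1 < n)%N.
Hypothesis hKE : forall a b, K a * E b = vq ^ epsp n a b *: (E b * K a).
Hypothesis hKF : forall a b, K a * F b = vq ^ (- epsp n a b) *: (F b * K a).
Hypothesis hEF : E i * F i - F i * E i =
  (vq - vq^-1)^-1 *: (K i * Kinv i.+1 - Kinv i * K i.+1).
Hypothesis hKKi : forall a, K a * Kinv a = 1 /\ Kinv a * K a = 1.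

Definition wt (u : A) (al be : Qv) := K i * u = al *: u /\ K i.+1 * u = be *: u.

Lemma eps_ii : epsp n i i = 1.
Proof. by rewrite /epsp eqxx. Qed.

Lemma eps_Si : epsp n i.+1 i = -1.
Proof. by rewrite /epsp [(i %% n)%N == _]eq_sym eqn_mod_dvd // subSnn dvdn1 (gtn_eqF hn) eqxx. Qed.

Lemma wtE u al be : wt u al be -> wt (E i * u) (vq * al) (vq^-1 * be).
Proof.
move=> [h1 h2]; split.
  by rewrite mulrA hKE eps_ii expr1z -scalerAl -mulrA h1 -scalerAr scalerA.
by rewrite mulrA hKE eps_Si exprN1 -scalerAl -mulrA h2 -scalerAr scalerA.
Qed.

Lemma wtF u al be : wt u al be -> wt (F i * u) (vq^-1 * al) (vq * be).
Proof.
move=> [h1 h2]; split.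
  by rewrite mulrA hKF eps_ii exprN1 -scalerAl -mulrA h1 -scalerAr scalerA.
by rewrite mulrA hKF eps_Si opprK expr1z -scalerAl -mulrA h2 -scalerAr scalerA.
Qed.

Lemma wtEk k u al be : wt u al be ->
  wt (E i ^+ k * u) (vq ^+ k * al) ((vq^-1) ^+ k * be).
Proof.
move=> h; elim: k => [|k IH]; first by rewrite !expr0 !mul1r.
by rewrite exprS -mulrA; have := wtE IH; rewrite !mulrA -!exprS.
Qed.

Lemma wtFk k u al be : wt u al be ->
  wt (F i ^+ k * u) ((vq^-1) ^+ k * al) (vq ^+ k * be).
Proof.
move=> h; elim: k => [|k IH]; first by rewrite !expr0 !mul1r.
by rewrite exprS -mulrA; have := wtF IH; rewrite !mulrA -!exprS.
Qed.

Lemma Kinv_wt a u al : al != 0 -> K a * u = al *: u -> Kinv a * u = al^-1 *: u.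
Proof.
move=> h0 h.
have e : u = al^-1 *: (K a * u) by rewrite h scalerA mulVf // scale1r.
by rewrite {1}e -scalerAr mulrA (hKKi a).2 mul1r.
Qed.

Lemma H_wt u al be : al != 0 -> be != 0 -> wt u al be ->
  (E i * F i - F i * E i) * u = ((al / be - be / al) / (vq - vq^-1)) *: u.
Proof.
move=> ha hb [h1 h2].
rewrite hEF -scalerAl mulrBl -!mulrA (Kinv_wt hb h2) h2 -!scalerAr h1.
rewrite (Kinv_wt ha h1) !scalerA -scalerBl scalerA; congr (_ *: _).
by rewrite mulrC (mulrC be^-1) (mulrC be).
Qed.

Lemma vanish a w al : \prod_(0 <= t < r.+1) (K a - (vq ^+ t)%:A) = 0 ->
  K a * w = al *: w -> (forall t, al != vq ^+ t) -> w = 0.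
Proof.
move=> hP h hne.
have := Pr_eig [seq vq ^+ t | t <- iota 0 r.+1] h.
have -> : Pr (K a) [seq vq ^+ t | t <- iota 0 r.+1] = 0.
  by rewrite /Pr big_map; move: hP; rewrite /index_iota subn0.
rewrite mul0r => /esym /eqP; rewrite scaler_eq0 => /orP [|/eqP //].
rewrite prodf_seq_eq0 => /hasP [g /mapP [t _ ->] /= /eqP].
by move/eqP; rewrite subr_eq0 (negbTE (hne t)).
Qed.

Lemma core1 (L c : nat) (x : A) :
  \prod_(0 <= t < r.+1) (K i - (vq ^+ t)%:A) = 0 ->
  wt x 1 (vq ^+ L) ->
  F i ^+ c * E i ^+ c * x = (\prod_(1 <= k < c.+1) (\sum_(j < k) sfun L j)) *: x.
Proof.
move=> hP hx; rewrite -mulrA; apply: chain.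
  apply: (vanish hP (wtF hx).1) => t; rewrite mulr1; exact: vqV_neqX.
move=> k; set w := E i ^+ k * x.
have hw := wtEk k hx; rewrite -/w in hw.
have hH := H_wt (mulf_neq0 (vqX_neq0 k) (oner_neq0 _))
  (mulf_neq0 (expf_neq0 _ (invr_neq0 vq_neq0)) (vqX_neq0 L)) hw.
have e1 : (E i * F i - F i * E i) * w = E i * (F i * w) - F i * (E i * w).
  by rewrite mulrBl !mulrA.
rewrite e1 exprVn in hH.
rewrite /sfun (id_s1 delta_neq0 (vqX_neq0 k) (vqX_neq0 L)) /delta.
by rewrite scaleNr -hH opprB addrCA subrr addr0.
Qed.

Lemma core2 (L c : nat) (x : A) :
  \prod_(0 <= t < r.+1) (K i.+1 - (vq ^+ t)%:A) = 0 ->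
  wt x (vq ^+ L) 1 ->
  E i ^+ c * F i ^+ c * x = (\prod_(1 <= k < c.+1) (\sum_(j < k) sfun L j)) *: x.
Proof.
move=> hP hx; rewrite -mulrA; apply: chain.
  apply: (vanish hP (wtE hx).2) => t; rewrite mulr1; exact: vqV_neqX.
move=> k; set w := F i ^+ k * x.
have hw := wtFk k hx; rewrite -/w in hw.
have hH := H_wt (mulf_neq0 (expf_neq0 _ (invr_neq0 vq_neq0)) (vqX_neq0 L))
  (mulf_neq0 (vqX_neq0 k) (oner_neq0 _)) hw.
have e1 : (E i * F i - F i * E i) * w = E i * (F i * w) - F i * (E i * w).
  by rewrite mulrBl !mulrA.
rewrite e1 exprVn in hH.
rewrite /sfun (id_s2 delta_neq0 (vqX_neq0 k) (vqX_neq0 L)) /delta.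
by rewrite -hH addrCA subrr addr0.
Qed.
End Main.

Unset Implicit Arguments.

Theorem lemma2p2p7 (r n c : nat) (lam : nat -> nat) (i : nat) :
  (3 <= r)%N -> (r < n)%N -> (1 <= c)%N ->
  (forall k, lam (k + n)%N = lam k) ->
  (\sum_(1 <= k < n.+1) lam k)%N = r ->
  (1 <= i <= n)%N ->
  (lam i = 0%N ->
    exists z : Qv, [/\ in_Zvv z, z != 0,
      (forall (A : algType Qv) (E F K Kinv : nat -> A),
         T_rels n r E F K Kinv ->
         if (c <= lam i.+1)%N
         then F i ^+ c * E i ^+ c * one_lam n K Kinv lam = z *: one_lam n K Kinv lam
         else F i ^+ c * E i ^+ c * one_lam n K Kinv lam = 0) &
      (c = 1%N -> lam i.+1 = 1%N -> z = 1)])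
  /\
  (lam i.+1 = 0%N ->
    exists z' : Qv, [/\ in_Zvv z', z' != 0,
      (forall (A : algType Qv) (E F K Kinv : nat -> A),
         T_rels n r E F K Kinv ->
         if (c <= lam i)%N
         then E i ^+ c * F i ^+ c * one_lam n K Kinv lam = z' *: one_lam n K Kinv lam
         else E i ^+ c * F i ^+ c * one_lam n K Kinv lam = 0) &
      (c = 1%N -> lam i = 1%N -> z' = 1)]).
Proof.
move=> hr hrn hc hlam hs /andP [hi1 hin].
have hn : (1 < n)%N by lia.
have Hw : forall (A : algType Qv) (E F K Kinv : nat -> A), T_rels n r E F K Kinv ->
    wt K i (one_lam n K Kinv lam) (vq ^+ lam i) (vq ^+ lam i.+1).
  move=> A E F K Kinv [hper [hKK [hKKi [_ [_ [_ [_ [_ [hZ hP]]]]]]]]].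
  have eig := one_lam_eig hKK hKKi hP hZ hs.
  split; first by apply: eig; rewrite hi1.
  case: (ltnP i n) => h; first by apply: eig.
  have -> : i.+1 = (1 + n)%N by lia.
  rewrite (proj1 (proj2 (proj2 (hper 1%N)))) hlam; apply: eig; lia.
have Hrel : forall (A : algType Qv) (E F K Kinv : nat -> A), T_rels n r E F K Kinv ->
   [/\ (forall a b, K a * E b = vq ^ epsp n a b *: (E b * K a)),
       (forall a b, K a * F b = vq ^ (- epsp n a b) *: (F b * K a)),
       E i * F i - F i * E i = (vq - vq^-1)^-1 *: (K i * Kinv i.+1 - Kinv i * K i.+1),
       (forall a, K a * Kinv a = 1 /\ Kinv a * K a = 1) &
       (forall a, \prod_(0 <= j < r.+1) (K a - (vq ^+ j)%:A) = 0)].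
  move=> A E F K Kinv [hper [hKK [hKKi [hKE [hKF [hEF [_ [_ [hZ hP]]]]]]]]].
  by split => //; have := hEF i i; rewrite eqxx.
split.
- move=> hli; set L := lam i.+1.
  case: (leqP c L) => hcL.
  + exists (\prod_(1 <= k < c.+1) (qn k * qn (L.+1 - k))); split.
    * elim/big_ind: _ => //; [exact: Zvv_1 | exact: Zvv_mul |].
      by move=> k _; apply: Zvv_mul; apply: Zvv_qn.
    * rewrite prodf_seq_neq0; apply/allP => k; rewrite mem_index_iota => /andP [k1 kc] /=.
      by apply: mulf_neq0; apply: qn_neq0; lia.
    * move=> A E F K Kinv hT.
      have hw := Hw _ _ _ _ _ hT; rewrite hli expr0 in hw.
      have [hKE hKF hEF hKKi hP] := Hrel _ _ _ _ _ hT.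
      rewrite (core1 hn hKE hKF hEF hKKi c (hP i) hw); congr (_ *: _).
      by apply: eq_big_nat => k /andP [k1 kc]; apply: a_eq; lia.
    * move=> c1 L1; rewrite c1 L1 big_nat1 /qn /= big_ord1 /= subn0 subnn expr0 divr1 mulr1.
      by [].
  + exists 1; split; [exact: Zvv_1 | exact: oner_neq0 | |].
    * move=> A E F K Kinv hT.
      have hw := Hw _ _ _ _ _ hT; rewrite hli expr0 in hw.
      have [hKE hKF hEF hKKi hP] := Hrel _ _ _ _ _ hT.
      rewrite (core1 hn hKE hKF hEF hKKi c (hP i) hw).
      rewrite (bigD1_seq L.+1) ?mem_index_iota ?iota_uniq //=.
      by rewrite a_zero mul0r scale0r.
    * by move=> c1 L1; move: hcL; rewrite c1 L1.
- move=> hli; set L := lam i.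
  case: (leqP c L) => hcL.
  + exists (\prod_(1 <= k < c.+1) (qn k * qn (L.+1 - k))); split.
    * elim/big_ind: _ => //; [exact: Zvv_1 | exact: Zvv_mul |].
      by move=> k _; apply: Zvv_mul; apply: Zvv_qn.
    * rewrite prodf_seq_neq0; apply/allP => k; rewrite mem_index_iota => /andP [k1 kc] /=.
      by apply: mulf_neq0; apply: qn_neq0; lia.
    * move=> A E F K Kinv hT.
      have hw := Hw _ _ _ _ _ hT; rewrite hli expr0 in hw.
      have [hKE hKF hEF hKKi hP] := Hrel _ _ _ _ _ hT.
      rewrite (core2 hn hKE hKF hEF hKKi c (hP i.+1) hw); congr (_ *: _).
      by apply: eq_big_nat => k /andP [k1 kc]; apply: a_eq; lia.
    * move=> c1 L1; rewrite c1 L1 big_nat1 /qn /= big_ord1 /= subn0 subnn expr0 divr1 mulr1.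
      by [].
  + exists 1; split; [exact: Zvv_1 | exact: oner_neq0 | |].
    * move=> A E F K Kinv hT.
      have hw := Hw _ _ _ _ _ hT; rewrite hli expr0 in hw.
      have [hKE hKF hEF hKKi hP] := Hrel _ _ _ _ _ hT.
      rewrite (core2 hn hKE hKF hEF hKKi c (hP i.+1) hw).
      rewrite (bigD1_seq L.+1) ?mem_index_iota ?iota_uniq //=.
      by rewrite a_zero mul0r scale0r.
    * by move=> c1 L1; move: hcL; rewrite c1 L1.
Qed.
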